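(* Let $t\in\mathbb{R}$, $\mu>0$ and $\sigma>0$. Let $\mathcal{L}(\mu,\sigma)$ be the set of probability distributions $F$ on $\mathbb{R}$ with $\mathbb{E}^F[X]=\mu$ and $\mathbb{E}^F[X^2]=\mu^2+\sigma^2$ (for $X\sim F$), and $\mathcal{L}^+(\mu,\sigma)=\{F\in\mathcal{L}(\mu,\sigma): F(0-)=0\}$. Then \[ \sup_{F \in \mathcal{L}^+(\mu, \sigma)} \mathbb{E}^{F}[(X-t)^2_+] = \sup_{F \in \mathcal{L}(\mu, \sigma)} \mathbb{E}^{F}[(X-t)_{+}^2] = \sigma^2 + (\mu-t)_+^2. \]
   Context: For $x\in\mathbb{R}$, $(x)_+=\max\{x,0\}$. $F(0-)=\mathbb{P}(X<0)$ under $F$. $\mathbb{E}^F$ denotes expectation when $X$ has distribution $F$. *)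

(* Defs.v *)
From HB Require Import structures.
From mathcomp Require Import all_boot all_order all_algebra.
From mathcomp Require Import all_classical all_reals all_analysis.
Set Implicit Arguments. Unset Strict Implicit. Unset Printing Implicit Defensive.
Import Order.TTheory GRing.Theory Num.Theory.
Local Open Scope classical_set_scope.
Local Open Scope ring_scope.

Definition pospart {R : realType} (x : R) : R := Num.max x 0.

Definition Lms {R : realType} (mu sigma : R) : set (probability R R) :=
  [set P | P.-integrable setT (fun x : R => x%:E) /\
           (\int[P]_x (x%:E) = mu%:E)%E /\
           (\int[P]_x ((x ^+ 2)%:E) = (mu ^+ 2 + sigma ^+ 2)%:E)%E].

(* L^+(mu, sigma): those with F(0-) = P(X < 0) = 0. *)
Definition Lms_plus {R : realType} (mu sigma : R) : set (probability R R) :=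
  [set P | Lms mu sigma P /\ P [set x : R | x < 0] = 0%E].

Definition stop_loss2 {R : realType} (t : R) (P : probability R R) : \bar R :=
  (\int[P]_x ((pospart (x - t)) ^+ 2)%:E)%E.

(* Main.v *)
Require Import Defs.
From HB Require Import structures.
From mathcomp Require Import all_boot all_order all_algebra.
From mathcomp Require Import all_classical all_reals all_analysis.
From mathcomp Require Import ring lra measurable_realfun.
Import Order.TTheory GRing.Theory Num.Theory.
Local Open Scope classical_set_scope.
Local Open Scope ring_scope.

Section mix.
Context {R : realType} (p a b : R).
Definition mixq : R := Num.max 0 (Num.min 1 p).
Lemma mixq0 : 0 <= mixq. Proof. by rewrite /mixq le_max lexx. Qed.
Lemma mixq1 : 0 <= 1 - mixq.
Proof. rewrite subr_ge0 /mixq ge_max ler01 ge_min lexx //. Qed.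
Definition mixm := measure_add (mscale (NngNum mixq0) (@dirac _ (R : measurableType _) b R))
   (mscale (NngNum mixq1) (@dirac _ (R : measurableType _) a R)).
Lemma mixm_setT : mixm setT = 1%E.
Proof.
rewrite /mixm /measure_add /msum /= big_ord_recr /= big_ord1 /mscale /= !diracT !mule1 -EFinD.
by rewrite indicE in_setT mulr1 /= subrKC.
Qed.
HB.instance Definition _ := Measure.on mixm.
HB.instance Definition _ := Measure_isProbability.Build _ _ _ mixm mixm_setT.

Definition mixP : probability R R := mixm.
Lemma mixmE A : mixm A = (mixq%:E * \d_b A + (1 - mixq)%:E * \d_a A)%E.
Proof. by rewrite /mixm measure_addE. Qed.

Lemma mix_ge0 (h : R -> R) : measurable_fun setT h -> (forall x, 0 <= h x) ->
  (\int[mixP]_x (h x)%:E = (mixq * h b + (1 - mixq) * h a)%:E)%E.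
Proof.
move=> mh h0.
pose m1 := mscale (NngNum mixq0) (@dirac _ (R : measurableType _) b R).
pose m2 := mscale (NngNum mixq1) (@dirac _ (R : measurableType _) a R).
have -> : (\int[mixP]_x (h x)%:E = \int[measure_add m1 m2]_x (h x)%:E)%E by [].
rewrite ge0_integral_measure_add //; last 2 first.
    by move=> x _; exact: h0.
  exact/measurable_EFinP.
rewrite /m1 /m2 !ge0_integral_mscale //; try (by move=> x _; exact: h0); try exact/measurable_EFinP.
rewrite !integral_dirac //; try exact/measurable_EFinP.
by rewrite !diracE !in_setT !mul1e /=.
Qed.

Lemma mix_int (h : R -> R) : measurable_fun setT h ->
  (\int[mixP]_x (h x)%:E = (mixq * h b + (1 - mixq) * h a)%:E)%E.
Proof.
move=> mh.
rewrite integralE.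
under eq_integral => x _ do rewrite funeposE -EFin_max.
under [X in (_ - X)%E]eq_integral => x _ do rewrite funenegE -EFinN -EFin_max.
rewrite (mix_ge0 (fun x => Num.max (h x) 0)); last 2 first.
  exact: measurable_maxr.
  by move=> x; rewrite le_max lexx orbT.
rewrite (mix_ge0 (fun x => Num.max (- h x) 0)); last 2 first.
  apply: measurable_maxr => //; exact: measurableT_comp.
  by move=> x; rewrite le_max lexx orbT.
rewrite -EFinD; congr EFin.
have H (y : R) : Num.max y 0 - Num.max (- y) 0 = y.
  by case: (leP y 0) => hy; rewrite ?(max_r hy) ?(max_l (ltW hy)); 
   [rewrite max_l ?oppr_ge0 // sub0r opprK | rewrite max_r ?oppr_le0 ?ltW // subr0].
rewrite -[in RHS](H (h b)) -[in RHS](H (h a)); ring.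
Qed.

End mix.
Lemma pospart_le0 {R : realType} {x : R} : x <= 0 -> pospart x = 0.
Proof. by move=> h; exact: max_r h. Qed.
Lemma pospart_id {R : realType} {x : R} : 0 <= x -> pospart x = x.
Proof. by move=> h; exact: max_l h. Qed.

Lemma pos_sq_le {R : realType} (x t m : R) : m <= t -> (pospart (x - t))^+2 <= (x - m)^+2.
Proof.
move=> mt; case: (leP (x - t) 0) => h.
  by rewrite (pospart_le0 h) expr0n /= sqr_ge0.
rewrite (pospart_id (ltW h)); nra.
Qed.

Lemma pospart_ge0 {R : realType} (x : R) : 0 <= pospart x.
Proof. by rewrite /pospart le_max lexx orbT. Qed.

Lemma measurable_pos2 {R : realType} (t : R) :
  measurable_fun setT (fun x : R => (pospart (x - t))^+2).
Proof.
apply: measurable_funX; rewrite /pospart.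
apply: measurable_maxr => //; apply: measurable_funB => //.
Qed.

Lemma measurable_sqsub {R : realType} (t : R) :
  measurable_fun setT (fun x : R => (x - t)^+2).
Proof.
apply: measurable_funX; apply: measurable_funB => //.
Qed.

Lemma ub_stop {R : realType} (t mu sigma : R) (P : probability R R) :
  Lms mu sigma P -> (stop_loss2 t P <= (sigma^+2 + (pospart (mu - t))^+2)%:E)%E.
Proof.
case=> iX [EX EX2].
set m := Num.min t mu.
pose q := fun y : R => y ^+ 2.
pose l1 := fun y : R => - (2 * m) * y.
pose c2 := fun _ : R => m ^+ 2.
pose l := fun y : R => l1 y + c2 y.
have iX2 : P.-integrable setT (EFin \o q).
  apply/integrableP; split; first exact/measurable_EFinP/measurable_funX.
  under eq_integral => x _ do rewrite /= /q ger0_norm ?sqr_ge0 //.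
  by rewrite EX2 ltry.
have iL1 : P.-integrable setT (EFin \o l1).
  rewrite (_ : _ \o _ = (fun x => (- (2 * m))%:E * x%:E)%E); last first.
    by apply/funext => x /=; rewrite EFinM.
  exact: integrableZl.
have iL2 : P.-integrable setT (EFin \o c2).
  exact: finite_measure_integrable_cst.
have iL : P.-integrable setT (EFin \o l).
  rewrite (_ : _ \o _ = (EFin \o l1) \+ (EFin \o c2)); last first.
    by apply/funext => x /=; rewrite EFinD.
  exact: integrableD.
apply: (@le_trans _ _ (\int[P]_x ((x - m)^+2)%:E)%E).
  rewrite /stop_loss2; apply: ge0_le_integral => //.
  - by move=> x _; rewrite lee_fin exprn_ge0 // pospart_ge0.
  - by apply/measurable_EFinP; exact: measurable_pos2.
  - by apply/measurable_EFinP; exact: measurable_sqsub.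
  - by move=> x _; rewrite lee_fin pos_sq_le // ge_min lexx.
have -> : (\int[P]_x ((x - m)^+2)%:E = \int[P]_x ((EFin \o q) \+ (EFin \o l)) x)%E.
  by apply: eq_integral => x _; rewrite /= -EFinD; congr EFin; rewrite /q /l /l1 /c2; ring.
rewrite integralD_EFin //.
have -> : (\int[P]_x (EFin \o l) x = \int[P]_x ((EFin \o l1) \+ (EFin \o c2)) x)%E.
  by apply: eq_integral => x _; rewrite /= EFinD.
rewrite integralD_EFin //.
have -> : (\int[P]_x (EFin \o l1) x = (- (2 * m))%:E * \int[P]_x x%:E)%E.
  rewrite -integralZl //; apply: eq_integral => x _; by rewrite /= EFinM.
have -> : (\int[P]_x (EFin \o c2) x = (m ^+ 2)%:E)%E.
  rewrite (_ : (EFin \o c2) = cst (m ^+ 2)%:E) // integral_cst // -[RHS]mule1; congr (_ * _)%E; exact: probability_setT.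
rewrite EX.
have -> : (\int[P]_x (EFin \o q) x = ((mu ^+ 2 + sigma ^+ 2)%:E))%E by rewrite -EX2.
rewrite -EFinM -!EFinD lee_fin.
case: (leP t mu) => h.
  have -> : m = t by exact: min_l h.
  rewrite (pospart_id); last by rewrite subr_ge0.
  by rewrite le_eqVlt; apply/orP; left; apply/eqP; ring.
have -> : m = mu by exact: min_r (ltW h).
rewrite (pospart_le0); last by rewrite subr_le0 ltW.
by rewrite le_eqVlt; apply/orP; left; apply/eqP; ring.
Qed.

Lemma mixqE {R : realType} {p : R} : 0 <= p -> p <= 1 -> mixq p = p.
Proof.
move=> p0 p1; rewrite /mixq (_ : Num.min 1 p = p); [exact: max_r | exact: min_r].
Qed.

Lemma two_point {R : realType} (t mu sigma d : R) : 0 < sigma -> 0 < d -> d <= mu ->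
  let s := sigma^+2 in let a := mu - d in let b := mu + s / d in
  let p := d^+2 / (d^+2 + s) in
  exists P, Lms_plus mu sigma P /\
    stop_loss2 t P = (p * (pospart (b - t))^+2 + (1 - p) * (pospart (a - t))^+2)%:E.
Proof.
move=> hs hd hdm s a b p.
have s0 : 0 < s by exact: exprn_gt0.
have d2s : 0 < d^+2 + s by rewrite addr_gt0 // exprn_gt0.
have p0 : 0 <= p.
  by rewrite /p divr_ge0 //; [exact: sqr_ge0 | exact: ltW].
have p1 : p <= 1 by rewrite /p ler_pdivrMr // mul1r lerDl ltW.
have qE := mixqE p0 p1.
have dn0 : d != 0 by rewrite gt_eqF.
have d2n0 : d^+2 + s != 0 by rewrite gt_eqF.
have M1 : p * b + (1 - p) * a = mu.
  by rewrite /p /b /a; field; rewrite d2n0 dn0.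
have M2 : p * b^+2 + (1 - p) * a^+2 = mu^+2 + s.
  by rewrite /p /b /a; field; rewrite d2n0 dn0.
have a0 : 0 <= a by rewrite /a subr_ge0.
have b0 : 0 <= b.
  by rewrite /b addr_ge0 // ?divr_ge0 // ltW // (lt_le_trans hd hdm).
exists (mixP p a b); split; first split; first split.
- apply/integrableP; split; first exact/measurable_EFinP.
  under eq_integral do rewrite abse_EFin.
  by rewrite (@mix_ge0 _ p a b (fun x => `|x|)) // ltry.
- split.
  + by rewrite (@mix_int _ p a b (fun x => x)) // qE M1.
  + by rewrite (@mix_int _ p a b (fun x => x ^+ 2)) ?qE ?M2 //; exact: measurable_funX.
  apply: (eq_trans (mixmE p a b _)); rewrite !diracE.
  rewrite !memNset /=; first by rewrite !mule0 adde0.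
  + by move=> h; move: (lt_le_trans h a0); rewrite ltxx.
  + by move=> h; move: (lt_le_trans h b0); rewrite ltxx.
- rewrite /stop_loss2 (@mix_int _ p a b (fun x => pospart (x - t) ^+ 2)) ?qE //.
  exact: measurable_pos2.
Qed.

Lemma lb_stop {R : realType} (t mu sigma e : R) : 0 < mu -> 0 < sigma -> 0 < e ->
  exists P, Lms_plus mu sigma P /\
    ((sigma^+2 + (pospart (mu - t))^+2)%:E - e%:E <= stop_loss2 t P)%E.
Proof.
move=> hmu hs he.
set s := sigma ^+ 2.
have s0 : 0 < s by exact: exprn_gt0.
case: (ltP t mu) => htm.
  pose d := if t <= 0 then mu else mu - t.
  have hd0 : 0 < d by rewrite /d; case: ifP => _ //; rewrite subr_gt0.
  have hdm : d <= mu.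
    rewrite /d; case: ifP => [_|/negbT]; first exact: lexx.
    by rewrite -ltNge => h; lra.
  have hdt : d <= mu - t.
    rewrite /d; case: ifP => [h|_]; last exact: lexx.
    lra.
  have [P [HP HV]] := two_point t mu sigma d hs hd0 hdm.
  exists P; split => //; rewrite HV -EFinB lee_fin.
  have dn0 : d != 0 by rewrite gt_eqF.
  have d2n0 : d^+2 + s != 0 by rewrite gt_eqF // addr_gt0 // exprn_gt0.
  rewrite (pospart_id (x := mu - t)); last lra.
  rewrite (pospart_id (x := mu - d - t)); last lra.
  rewrite (pospart_id (x := mu + s / d - t)); last first.
    have : 0 <= s / d by rewrite divr_ge0 // ltW.
    lra.
  have -> : d ^+ 2 / (d ^+ 2 + s) * (mu + s / d - t) ^+ 2 +
     (1 - d ^+ 2 / (d ^+ 2 + s)) * (mu - d - t) ^+ 2 = s + (mu - t)^+2.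
    by field; rewrite d2n0 dn0.
  lra.
set c := t - mu.
have c0 : 0 <= c by rewrite subr_ge0.
have c2 : 0 < 2 * c + 2 by lra.
pose d := Num.min (Num.min 1 mu) (Num.min (e / (2 * c + 2)) (s / (2 * c + 2))).
have hd0 : 0 < d by rewrite /d !lt_min ltr01 hmu !divr_gt0.
have hd1 : d <= 1 by rewrite /d !ge_min lexx.
have hdm : d <= mu by rewrite /d !ge_min lexx orbT.
have hde : d <= e / (2 * c + 2) by rewrite /d !ge_min lexx !orbT.
have hds : d <= s / (2 * c + 2) by rewrite /d !ge_min lexx !orbT.
rewrite ler_pdivlMr // in hde.
rewrite ler_pdivlMr // in hds.
have [P [HP HV]] := two_point t mu sigma d hs hd0 hdm.
exists P; split => //; rewrite HV -EFinB lee_fin.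
have dn0 : d != 0 by rewrite gt_eqF.
have d2s : 0 < d^+2 + s by rewrite addr_gt0 // exprn_gt0.
have d2n0 : d^+2 + s != 0 by rewrite gt_eqF.
rewrite (pospart_le0 (x := mu - t)); last lra.
rewrite (pospart_le0 (x := mu - d - t)); last first.
  lra.
have hb : 0 <= mu + s / d - t.
  have -> : mu + s / d - t = (s - d * c) / d by rewrite /c; field.
  apply: divr_ge0; last exact: ltW.
  nra.
rewrite (pospart_id hb).
have -> : d ^+ 2 / (d ^+ 2 + s) * (mu + s / d - t) ^+ 2 +
     (1 - d ^+ 2 / (d ^+ 2 + s)) * 0 ^+ 2 = (s - d * c) ^+ 2 / (d ^+ 2 + s).
  by rewrite /c; field; rewrite d2n0 dn0.
rewrite ler_pdivlMr //.
have h1 : d * (d + 2 * c) <= e by nra.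
have h2 : s * (d * (d + 2 * c)) <= s * e by rewrite ler_wpM2l // ltW.
nra.
Qed.

Theorem corollary2 (R : realType) (t mu sigma : R) (hmu : 0 < mu) (hsigma : 0 < sigma) :
  ereal_sup [set stop_loss2 t P | P in Lms_plus mu sigma] =
    ereal_sup [set stop_loss2 t P | P in Lms mu sigma] /\
  ereal_sup [set stop_loss2 t P | P in Lms mu sigma] =
    (sigma ^+ 2 + (pospart (mu - t)) ^+ 2)%:E.
Proof.
set T := (sigma ^+ 2 + (pospart (mu - t)) ^+ 2)%:E.
have H1 : (ereal_sup [set stop_loss2 t P | P in Lms_plus mu sigma] <=
    ereal_sup [set stop_loss2 t P | P in Lms mu sigma])%E.
  by apply: ereal_sup_le => _ [P [HP _] <-]; exists P.
have H2 : (ereal_sup [set stop_loss2 t P | P in Lms mu sigma] <= T)%E.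
  by apply: ge_ereal_sup => _ [P HP <-]; exact: ub_stop.
have H3 : (T <= ereal_sup [set stop_loss2 t P | P in Lms_plus mu sigma])%E.
  apply/lee_subgt0Pr => e e0.
  have [P [HP HV]] := lb_stop t mu sigma e hmu hsigma e0.
  by apply: le_ereal_sup_tmp; exists (stop_loss2 t P) => //; exists P.
have E2 : ereal_sup [set stop_loss2 t P | P in Lms mu sigma] = T.
  by apply/eqP; rewrite eq_le H2 /= (le_trans H3 H1).
split => //.
by rewrite E2; apply/eqP; rewrite eq_le H3 andbT -E2 H1.
Qed.
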